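(* Let $(X,d_X)$ be a discrete countable metric space and $A\subset X$ nonempty such that $X\setminus N_k(A)\neq\emptyset$ for every $k\in\mathbb N$. Then $M_{X,d^A}$ is a submodule of the Hilbert $C^*_u(X)$-module $C^*_u(X)$ (with inner product $\langle S,T\rangle=S^*T$) which is not orthogonally complemented; more precisely, $M_{X,d^A}\ne C^*_u(X)$ while its orthogonal complement in $C^*_u(X)$ is $\{0\}$.
   Context: $H_X=\ell^2(X)$, $C^*_u(X)$ is the norm closure in $\mathbb B(H_X)$ of bounded finite-propagation operators (propagation at most $L$ means $(\delta_x,T\delta_y)=0$ whenever $d_X(x,y)\ge L$). $N_k(A)=\{x\in X:d_X(x,A)\le k\}$. With $X_0,X_1$ two copies of $X$ ($x\in X$ denoted $x_i$ in $X_i$), $d^A$ is the metric on $X_0\sqcup X_1$ given by $d^A(x_i,y_i)=d_X(x,y)$, $i=0,1$, and $d^A(x_0,y_1)=\inf_{z\in A}[d_X(x,z)+d_X(y,z)+1]$. $M_{X,d^A}$ is the norm closure of the bounded operators $T:H_{X_0}\to H_{X_1}$ of finite propagation with respect to $d^A$ (there is $L$ with $(\delta_{y_1},T\delta_{x_0})=0$ whenever $d^A(x_0,y_1)\ge L$), regarded as a subset of $\mathbb B(H_X)$ via the identification $H_{X_0}=H_{X_1}=H_X$. *)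

(* Defs.v *)
From HB Require Import structures.
From mathcomp Require Import all_boot all_order all_algebra.
From mathcomp Require Import all_classical all_reals all_analysis.
From mathcomp Require Import complex.
Set Implicit Arguments. Unset Strict Implicit. Unset Printing Implicit Defensive.
Import Order.TTheory GRing.Theory Num.Theory.
Local Open Scope classical_set_scope.
Local Open Scope ring_scope.

Section Defs.
Variables (R : realType) (X : countType).

Definition is_metric (d : X -> X -> R) : Prop :=
  [/\ forall x y, 0 <= d x y, forall x y, d x y = 0 <-> x = y,
      forall x y, d x y = d y x & forall x y z, d x z <= d x y + d y z].

Definition discrete_metric (d : X -> X -> R) : Prop :=
  forall x, exists2 e : R, 0 < e & forall y, d x y < e -> y = x.

Definition dist_to (d : X -> X -> R) (A : set X) (x : X) : R :=
  inf [set d x z | z in A].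
Definition Nbhd (d : X -> X -> R) (A : set X) (k : nat) : set X :=
  [set x | dist_to d A x <= k%:R].

(* d^A(x_0, y_1) *)
Definition dA01 (d : X -> X -> R) (A : set X) (x y : X) : R :=
  inf [set d x z + d y z + 1 | z in A].

Definition reC (z : R[i]) : R := let: Complex a _ := z in a.
Definition imC (z : R[i]) : R := let: Complex _ b := z in b.

Definition vec := X -> R[i].
Definition sqnorm (f : vec) : \bar R :=
  \esum_(x in [set: X]) ((reC (f x)) ^+ 2 + (imC (f x)) ^+ 2)%:E.
Definition in_l2 (f : vec) : Prop := (sqnorm f < +oo)%E.
Definition delta (y : X) : vec := fun x => if x == y then 1 else 0.

Definition rsum (h : X -> R) : R :=
  fine (\esum_(x in [set: X]) (Num.max (h x) 0)%:E)
  - fine (\esum_(x in [set: X]) (Num.max (- h x) 0)%:E).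
Definition ip (u v : vec) : R[i] :=
  Complex (rsum (fun x => reC (conjc (u x) * v x)))
          (rsum (fun x => imC (conjc (u x) * v x))).

(* operators on H_X; only their values on l^2(X) matter *)
Definition op := vec -> vec.
Definition bounded_op (T : op) : Prop :=
  [/\ forall f, in_l2 f -> in_l2 (T f),
      forall (a : R[i]) f g, in_l2 f -> in_l2 g ->
        T (fun x => a * f x + g x) = (fun x => a * T f x + T g x)
    & exists c : R, forall f, in_l2 f -> (sqnorm (T f) <= c%:E * sqnorm f)%E].

Definition op_close (T S : op) (eps : R) : Prop :=
  forall f, in_l2 f ->
    (sqnorm (fun x => (T f x - S f x)%R) <= (eps ^+ 2)%:E * sqnorm f)%E.

Definition op_closure (P : op -> Prop) (T : op) : Prop :=
  bounded_op T /\ forall eps : R, 0 < eps -> exists2 S, P S & op_close T S eps.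

Definition finite_prop (d : X -> X -> R) (T : op) : Prop :=
  exists L : R, forall x y, L <= d x y -> T (delta y) x = 0.

Definition Cu (d : X -> X -> R) : op -> Prop :=
  op_closure (fun S => bounded_op S /\ finite_prop d S).

Definition finite_prop_dA (d : X -> X -> R) (A : set X) (T : op) : Prop :=
  exists L : R, forall x y, L <= dA01 d A x y -> T (delta x) y = 0.

Definition MdA (d : X -> X -> R) (A : set X) : op -> Prop :=
  op_closure (fun S => bounded_op S /\ finite_prop_dA d A S).

End Defs.

(* Main.v *)
Require Import Defs.
From HB Require Import structures.
From mathcomp Require Import all_boot all_order all_algebra.
From mathcomp Require Import all_classical all_reals all_analysis.
From mathcomp Require Import complex.
From mathcomp Require Import ring lra.
Import Order.TTheory GRing.Theory Num.Theory.
Local Open Scope classical_set_scope.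
Local Open Scope ring_scope.

Definition sq {R : realType} (z : R[i]) : R := reC z ^+ 2 + imC z ^+ 2.
Lemma reD (R : realType) (a b : R[i]) : reC (a + b) = reC a + reC b.
Proof. by case: a => ? ?; case: b. Qed.
Lemma sqM (R : realType) (a b : R[i]) : sq (a * b) = sq a * sq b.
Proof. case: a => a1 a2; case: b => b1 b2; rewrite /sq /=. ring. Qed.
Lemma sqD (R : realType) (a b : R[i]) : sq (a + b) <= 2 * (sq a + sq b).
Proof. case: a => a1 a2; case: b => b1 b2; rewrite /sq /=. have h1 := sqr_ge0 (a1 - b1). have h2 := sqr_ge0 (a2 - b2). nra. Qed.
Arguments sqD {R}. Arguments sqM {R}.
Lemma sq_ge0 (R : realType) (a : R[i]) : 0 <= sq a.
Proof. rewrite /sq; apply: addr_ge0; exact: sqr_ge0. Qed.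

Arguments sq_ge0 {R}.
Local Open Scope ereal_scope.
Lemma esumZ (R : realType) (T : choiceType) (S : set T) (a : T -> \bar R) (r : R) :
  (0 <= r)%R -> (forall x, 0 <= a x) ->
  \esum_(i in S) (r%:E * a i) = r%:E * \esum_(i in S) a i.
Proof.
move=> r0 a0; rewrite /esum -ereal_supZl //; last first.
  by apply/set0P; exists 0; exists set0 => //; [exact: fsets_set0 | rewrite fsbig_set0].
congr ereal_sup; rewrite image_comp; apply: eq_imagel => F _ /=.
by rewrite ge0_mule_fsumr.
Qed.

Lemma sqnorm_ge0 (R : realType) (X : countType) (f : vec R X) : 0 <= sqnorm f.
Proof. by apply: esum_ge0 => x _; rewrite lee_fin; exact: sq_ge0. Qed.

Arguments sqnorm_ge0 {R X}.
Lemma sqnorm_le (R : realType) (X : countType) (f g : vec R X) (k : R) :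
  (0 <= k)%R -> (forall x, sq (f x) <= k * sq (g x))%R -> sqnorm f <= k%:E * sqnorm g.
Proof.
move=> k0 H; rewrite /sqnorm -esumZ //; last by move=> x; rewrite lee_fin; exact: sq_ge0.
by apply: le_esum => x _; rewrite -EFinM lee_fin; exact: H.
Qed.

Lemma sqnorm_pt (R : realType) (X : countType) (f : vec R X) x : (sq (f x))%:E <= sqnorm f.
Proof.
apply: esum_ge; exists [set x]; first by split; [exact: finite_set1 | by []].
by rewrite fsbig_set1.
Qed.

Lemma sqnorm_add (R : realType) (X : countType) (f g : vec R X) :
  sqnorm (fun x => f x + g x)%R <= 2%:E * sqnorm f + 2%:E * sqnorm g.
Proof.
rewrite /sqnorm -!esumZ // -?esumD //; try by move=> x; rewrite ?lee_fin; exact: sq_ge0.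
- apply: le_esum => x _; rewrite -!EFinM -EFinD lee_fin; have := sqD (f x) (g x).
  by rewrite mulrDr.
- by move=> x _; rewrite -EFinM lee_fin mulr_ge0 //; exact: sq_ge0.
- by move=> x _; rewrite -EFinM lee_fin mulr_ge0 //; exact: sq_ge0.
Qed.

Lemma fin_mul_lt (R : realType) (k : R) (s : \bar R) : 0 <= s -> s < +oo -> k%:E * s < +oo.
Proof. by case: s => // t _ _; rewrite -EFinM ltry. Qed.

Lemma sqnorm_single (R : realType) (X : countType) (y : X) (v : R[i]) :
  sqnorm (fun w => if w == y then v else 0%R) = (sq v)%:E.
Proof.
rewrite /sqnorm (eq_esum (b := fun w => if w \in [set y] then (sq v)%:E else 0)).
  by rewrite -esum_mkcond esum_set1 // lee_fin; exact: sq_ge0.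
move=> w _; rewrite in_set1; case: (w == y) => //.
by rewrite /= expr0n /= addr0.
Qed.

Lemma l2_le (R : realType) (X : countType) (f g : vec R X) :
  (forall w, sq (f w) <= sq (g w))%R -> in_l2 g -> in_l2 f.
Proof.
move=> H hg; rewrite /in_l2; apply: (le_lt_trans (@sqnorm_le _ _ f g 1 _ _)) => //.
  by move=> w; rewrite mul1r.
by apply: fin_mul_lt => //; exact: sqnorm_ge0.
Qed.

Lemma l2_delta (R : realType) (X : countType) (z : X) : in_l2 (delta R z).
Proof. by rewrite /in_l2 /delta sqnorm_single ltry. Qed.

Lemma sq0 (R : realType) : sq (0%R : R[i]) = 0%R.
Proof. by rewrite /sq /= expr0n /= addr0. Qed.

Lemma l2_0 (R : realType) (X : countType) : in_l2 (fun _ : X => (0%R : R[i])).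
Proof. by rewrite /in_l2 /sqnorm esum1 // => x _; have := sq0 R; rewrite /sq => ->. Qed.

Lemma l2_add (R : realType) (X : countType) (f g : vec R X) :
  in_l2 f -> in_l2 g -> in_l2 (fun x => f x + g x)%R.
Proof.
rewrite /in_l2 => hf hg; apply: le_lt_trans; first exact: sqnorm_add.
by apply: lte_add_pinfty; apply: fin_mul_lt => //; exact: sqnorm_ge0.
Qed.

Lemma l2_scale (R : realType) (X : countType) (a : R[i]) (f : vec R X) :
  in_l2 f -> in_l2 (fun x => a * f x)%R.
Proof.
rewrite /in_l2 => hf; apply: (le_lt_trans (@sqnorm_le _ _ _ f (sq a) _ _)).
- exact: sq_ge0.
- by move=> w; rewrite sqM.
by apply: fin_mul_lt => //; exact: sqnorm_ge0.
Qed.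

Lemma sq_gt0 (R : realType) (z : R[i]) : z != 0%R -> (0 < sq z)%R.
Proof.
case: z => a b nz; rewrite /sq /=.
have ha := sqr_ge0 a; have hb := sqr_ge0 b.
rewrite lt_neqAle addr_ge0 // andbT eq_sym.
apply/negP; rewrite paddr_eq0 // => /andP[]; rewrite !sqrf_eq0 => /eqP a0 /eqP b0.
by move: nz; rewrite a0 b0 eqxx.
Qed.
Local Close Scope ereal_scope.
Arguments sqnorm_le {R X}. Arguments sqnorm_pt {R X}. Arguments sqnorm_add {R X}.
Arguments l2_le {R X}. Arguments l2_add {R X}. Arguments l2_scale {R X}. Arguments l2_delta {R X}.
Arguments sq_gt0 {R}.

Lemma op0 (R : realType) (X : countType) (S : op R X) :
  bounded_op S -> S (fun _ => 0) = (fun _ => 0).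
Proof.
case=> _ hlin _; have := hlin (-1) _ _ (l2_0 R X) (l2_0 R X).
have -> : (fun x : X => -1 * (0 : R[i]) + 0) = (fun _ => 0).
  by apply: funext => x; rewrite mulr0 addr0.
move=> h; apply: funext => x; have := congr1 (fun F => F x) h => /=.
by rewrite mulN1r addNr.
Qed.

Lemma opD (R : realType) (X : countType) (S : op R X) f g :
  bounded_op S -> in_l2 f -> in_l2 g ->
  S (fun x => f x + g x) = (fun x => S f x + S g x).
Proof.
case=> _ hlin _ hf hg; have := hlin 1 _ _ hf hg.
have -> : (fun x => 1 * f x + g x) = (fun x => f x + g x).
  by apply: funext => x; rewrite mul1r.
move=> ->; apply: funext => x; by rewrite mul1r.
Qed.

Lemma opZ (R : realType) (X : countType) (S : op R X) (a : R[i]) f :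
  bounded_op S -> in_l2 f ->
  S (fun x => a * f x) = (fun x => a * S f x).
Proof.
move=> hS hf; have [_ hlin _] := hS; have := hlin a _ _ hf (l2_0 R X).
have -> : (fun x => a * f x + 0) = (fun x => a * f x).
  by apply: funext => x; rewrite addr0.
move=> ->; rewrite op0 //; apply: funext => x; by rewrite addr0.
Qed.

Lemma opB (R : realType) (X : countType) (S : op R X) f g :
  bounded_op S -> in_l2 f -> in_l2 g ->
  S (fun x => f x - g x) = (fun x => S f x - S g x).
Proof.
case=> _ hlin _ hf hg; have := hlin (-1) _ _ hg hf.
have -> : (fun x => -1 * g x + f x) = (fun x => f x - g x).
  by apply: funext => x; rewrite mulN1r addrC.
move=> ->; apply: funext => x; by rewrite mulN1r addrC.
Qed.

Lemma bound_nn (R : realType) (X : countType) (S : op R X) :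
  bounded_op S -> exists2 c : R, 0 <= c &
    forall f, in_l2 f -> (sqnorm (S f) <= c%:E * sqnorm f)%E.
Proof.
case=> _ _ [c hc]; exists (Num.max c 0); first by rewrite le_max lexx orbT.
move=> f hf; apply: (le_trans (hc f hf)); apply: lee_wpmul2r; first exact: sqnorm_ge0.
by rewrite lee_fin le_max lexx.
Qed.

Lemma tail (R : realType) (X : countType) (g : vec R X) (e : R) : in_l2 g -> 0 < e ->
  exists s : seq X, (sqnorm (fun w => if w \in s then 0%R else g w) <= e%:E)%E.
Proof.
move=> hg e0.
have [t ht] : exists t, sqnorm g = t%:E.
  move: hg (sqnorm_ge0 g); rewrite /in_l2; case: (sqnorm g) => // t _ _; by exists t.
have : ((t - e)%:E < sqnorm g)%E by rewrite ht lte_fin ltrBlDr ltrDl.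
rewrite {1}/sqnorm /esum => /ereal_sup_gt [_ [F [finF _] <-]] hlt.
exists (finmap.enum_fset (fset_set F)).
set a := fun w => (reC (g w) ^+ 2 + imC (g w) ^+ 2)%:E.
set Q := sqnorm _.
have dec : sqnorm g = (\esum_(w in F) a w + Q)%E.
  rewrite esum_mkcond /Q /sqnorm -esumD; last 2 first.
  - by move=> w _; case: ifP => // _; rewrite /a lee_fin; exact: sq_ge0.
  - by move=> w _; rewrite lee_fin; exact: sq_ge0.
  apply: eq_esum => w _; rewrite in_fset_set //; case: ifP => _.
    by rewrite /= expr0n /= addr0 adde0.
  by rewrite add0e.
rewrite esum_fset // in dec; last by move=> w _; rewrite /a lee_fin; exact: sq_ge0.
move: hlt dec; rewrite ht.
have Q0 : (0 <= Q)%E by exact: sqnorm_ge0.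
move: Q0; case: Q => [q| |] //; case: (\sum_(x \in F) a x)%E => [p| |] //.
- move=> q0 hlt; rewrite -EFinD => -[ht2]; rewrite lee_fin.
  by move: hlt; rewrite lte_fin; lra.
all: by [].
Qed.

Lemma fin_comb (R : realType) (X : countType) (S : op R X) (g : vec R X) y (s : seq X) :
  bounded_op S -> in_l2 g -> (forall z, g z != 0 -> S (delta R z) y = 0) ->
  S (fun w => if w \in s then g w else 0) y = 0.
Proof.
move=> hS hg hz; elim: s => [|z s IH].
  have -> : (fun w : X => if w \in [::] then g w else 0) = (fun _ => 0).
    by apply: funext => w.
  by rewrite op0.
have l2s : in_l2 (fun w => if w \in s then g w else 0).
  apply: (l2_le _ g) => // w; case: ifP => _; rewrite ?sq0 ?lexx //; exact: sq_ge0.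
have [zs|zs] := boolP (z \in s).
  have -> : (fun w => if w \in z :: s then g w else 0) = (fun w => if w \in s then g w else 0).
    apply: funext => w; rewrite in_cons; have [->|] := eqVneq w z; by rewrite ?zs.
  exact: IH.
have -> : (fun w => if w \in z :: s then g w else 0) =
   (fun w => g z * delta R z w + (if w \in s then g w else 0)).
  apply: funext => w; rewrite in_cons /delta; have [->|] := eqVneq w z.
    by rewrite (negbTE zs) mulr1 addr0.
  by rewrite mulr0 add0r.
rewrite opD //; last exact: l2_scale (l2_delta z).
rewrite opZ //; last exact: l2_delta.
rewrite IH addr0; have [->|nz] := eqVneq (g z) 0; first by rewrite mul0r.
by rewrite hz // mulr0.
Qed.

Arguments bound_nn {R X}. Arguments tail {R X}. Arguments op0 {R X}. Arguments opD {R X}.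
Arguments opZ {R X}. Arguments opB {R X}. Arguments fin_comb {R X}.

Lemma zero_at (R : realType) (X : countType) (S : op R X) (g : vec R X) y :
  bounded_op S -> in_l2 g -> (forall z, g z != 0 -> S (delta R z) y = 0) ->
  S g y = 0.
Proof.
move=> hS hg hz; apply/eqP; apply/negPn/negP => nz.
have sv0 := sq_gt0 _ nz; set sv := sq (S g y) in sv0.
have [c c0 hc] := bound_nn S hS.
set e := sv / (2 * (c + 1)).
have e0 : 0 < e by rewrite /e divr_gt0 // mulr_gt0 // ltr_pwDr.
have he : e * (2 * (c + 1)) = sv by rewrite /e mulfVK // mulf_neq0 // gt_eqF // ltr_pwDr.
have [s hs] := tail g e hg e0.
set g2 := fun w => if w \in s then 0 else g w.
set g1 := fun w => if w \in s then g w else 0.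
have l2g2 : in_l2 g2.
  apply: (l2_le _ g) => // w; rewrite /g2; case: ifP => _; rewrite ?sq0 ?lexx //; exact: sq_ge0.
have l2g1 : in_l2 g1.
  apply: (l2_le _ g) => // w; rewrite /g1; case: ifP => _; rewrite ?sq0 ?lexx //; exact: sq_ge0.
have gE : g = (fun w => g2 w + g1 w).
  by apply: funext => w; rewrite /g1 /g2; case: ifP; rewrite ?add0r ?addr0.
have : S g y = S g2 y.
  by rewrite gE opD // (fin_comb S g y s hS hg hz) addr0.
move=> hyv.
have : (sv%:E <= (c * e)%:E)%E.
  rewrite /sv hyv; apply: le_trans (sqnorm_pt _ y) _.
  apply: le_trans (hc _ l2g2) _; rewrite EFinM; apply: lee_wpmul2l; [by rewrite lee_fin | exact: hs].
rewrite lee_fin; nra.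
Qed.

Lemma dA_ge (R : realType) (X : countType) (d : X -> X -> R) (A : set X) x y :
  is_metric d -> A !=set0 -> d x y + 1 <= dA01 d A x y.
Proof.
move=> [d0 deq dsym dtri] [a Aa]; apply: lb_le_inf.
  by exists (d x a + d y a + 1); exists a.
move=> _ [z Az <-]; rewrite lerD2r -(dsym z y); exact: dtri.
Qed.

Lemma dA_lbound (R : realType) (X : countType) (d : X -> X -> R) (A : set X) x y :
  is_metric d -> has_lbound [set d x z + d y z + 1 | z in A].
Proof.
move=> [d0 _ _ _]; exists 0 => _ [z _ <-].
by rewrite addr_ge0 // addr_ge0.
Qed.

Lemma dA_tri (R : realType) (X : countType) (d : X -> X -> R) (A : set X) x y z :
  is_metric d -> A !=set0 -> dA01 d A x y <= d x z + dA01 d A z y.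
Proof.
move=> hm [a Aa]; have [d0 deq dsym dtri] := hm.
rewrite addrC -lerBlDr; apply: lb_le_inf.
  by exists (d z a + d y a + 1); exists a.
move=> _ [w Aw <-]; rewrite lerBlDr.
have h : dA01 d A x y <= d x w + d y w + 1.
  by apply: (ge_inf (@dA_lbound _ _ d A x y hm)); exists w.
have := dtri x z w; lra.
Qed.

Lemma dA_diag (R : realType) (X : countType) (d : X -> X -> R) (A : set X) x :
  is_metric d -> A !=set0 -> 2 * dist_to d A x + 1 <= dA01 d A x x.
Proof.
move=> hm [a Aa]; have [d0 deq dsym dtri] := hm.
have lb : has_lbound [set d x z | z in A] by exists 0 => _ [z _ <-].
apply: lb_le_inf; first by exists (d x a + d x a + 1); exists a.
move=> _ [w Aw <-].
have h : dist_to d A x <= d x w by apply: (ge_inf lb); exists w.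
lra.
Qed.

Lemma far_point (R : realType) (X : countType) (d : X -> X -> R) (A : set X) (L : R) :
  is_metric d -> A !=set0 -> (forall k : nat, ~` Nbhd d A k !=set0) ->
  exists x, L <= dA01 d A x x.
Proof.
move=> hm hA hN; have [x nx] := hN (Num.bound `|L|).
exists x; apply: le_trans (@dA_diag _ _ d A x hm hA).
have hb := archi_boundP (normr_ge0 L).
have hLL := ler_norm L.
have : ~ (dist_to d A x <= (Num.bound `|L|)%:R) by exact: nx.
move/negP; rewrite -ltNge => hd.
have : 0 <= ((Num.bound `|L|)%:R : R) by [].
lra.
Qed.

Lemma l2_fin (R : realType) (X : countType) (f : vec R X) :
  in_l2 f -> exists2 t, 0 <= t & sqnorm f = t%:E.
Proof.
move: (sqnorm_ge0 f); rewrite /in_l2; case: (sqnorm f) => // t t0 _; exists t => //.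
Qed.

Lemma chain2 (R : realType) (A B C : \bar R) (p q t : R) : (0 <= B)%E -> (0 <= C)%E ->
  (A <= 2%:E * B + 2%:E * C)%E -> (B <= (p * t)%:E)%E -> (C <= (q * t)%:E)%E ->
  (A <= ((2 * p + 2 * q) * t)%:E)%E.
Proof.
case: B => [b| |]; case: C => [c| |] => // _ _ hA hb hc.
apply: le_trans hA _; rewrite -!EFinM -EFinD lee_fin; rewrite lee_fin in hb hc.
move: hc; rewrite lee_fin => hc; have -> : (2 * p + 2 * q) * t = 2 * (p * t) + 2 * (q * t) by ring. lra.
Qed.
Arguments l2_fin {R X}. Arguments chain2 {R}.

Lemma bounded_add (R : realType) (X : countType) (S T : op R X) :
  bounded_op S -> bounded_op T -> bounded_op (fun f x => S f x + T f x).
Proof.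
move=> hS hT; have [c1 c10 h1] := bound_nn S hS; have [c2 c20 h2] := bound_nn T hT.
have [l2S linS _] := hS; have [l2T linT _] := hT.
split.
- move=> f hf; exact: l2_add (l2S f hf) (l2T f hf).
- move=> a f g hf hg; rewrite linS // linT //; apply: funext => x /=.
  by rewrite mulrDr addrACA.
- exists (2 * c1 + 2 * c2) => f hf; have [t t0 ht] := l2_fin f hf.
  rewrite ht -EFinM; apply: (chain2 _ (sqnorm (S f)) (sqnorm (T f))).
  + exact: sqnorm_ge0.
  + exact: sqnorm_ge0.
  + exact: sqnorm_add.
  + by rewrite EFinM -ht; exact: h1.
  + by rewrite EFinM -ht; exact: h2.
Qed.

Lemma bounded_scale (R : realType) (X : countType) (a : R[i]) (S : op R X) :
  bounded_op S -> bounded_op (fun f x => a * S f x).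
Proof.
move=> hS; have [c c0 h] := bound_nn S hS; have [l2S linS _] := hS.
split.
- move=> f hf; exact: l2_scale (l2S f hf).
- move=> b f g hf hg; rewrite linS //; apply: funext => x /=.
  by rewrite mulrDr mulrCA.
- exists (sq a * c) => f hf.
  apply: le_trans (sqnorm_le _ (S f) (sq a) (sq_ge0 a) _) _.
    by move=> x; rewrite sqM.
  by rewrite EFinM -muleA; apply: lee_wpmul2l; [rewrite lee_fin; exact: sq_ge0| exact: h].
Qed.

Lemma bounded_comp (R : realType) (X : countType) (S T : op R X) :
  bounded_op S -> bounded_op T -> bounded_op (fun f => S (T f)).
Proof.
move=> hS hT; have [c1 c10 h1] := bound_nn S hS; have [c2 c20 h2] := bound_nn T hT.
have [l2S linS _] := hS; have [l2T linT _] := hT.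
split.
- move=> f hf; exact: l2S _ (l2T f hf).
- move=> a f g hf hg; rewrite linT // linS //; [exact: l2T|exact: l2T].
- exists (c1 * c2) => f hf.
  apply: le_trans (h1 _ (l2T f hf)) _.
  by rewrite EFinM -muleA; apply: lee_wpmul2l; [rewrite lee_fin| exact: h2].
Qed.

Lemma close_add (R : realType) (X : countType) (S S' T T' : op R X) (e : R) :
  op_close S S' (e / 2) -> op_close T T' (e / 2) ->
  op_close (fun f x => S f x + T f x) (fun f x => S' f x + T' f x) e.
Proof.
move=> h1 h2 f hf; have [t t0 ht] := l2_fin f hf.
have -> : (fun x => S f x + T f x - (S' f x + T' f x)) =
          (fun x => (S f x - S' f x) + (T f x - T' f x)).
  by apply: funext => x; rewrite opprD addrACA.
have -> : ((e ^+ 2)%:E * sqnorm f)%E = ((2 * (e / 2) ^+ 2 + 2 * (e / 2) ^+ 2) * t)%:E.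
  by rewrite ht -EFinM; congr EFin; field.
apply: (chain2 _ (sqnorm (fun x => S f x - S' f x)) (sqnorm (fun x => T f x - T' f x))).
+ exact: sqnorm_ge0.
+ exact: sqnorm_ge0.
+ exact: sqnorm_add.
+ by rewrite EFinM -ht; exact: h1.
+ by rewrite EFinM -ht; exact: h2.
Qed.

Lemma close_scale (R : realType) (X : countType) (a : R[i]) (S S' : op R X) (e e1 : R) :
  sq a * e1 ^+ 2 <= e ^+ 2 -> op_close S S' e1 ->
  op_close (fun f x => a * S f x) (fun f x => a * S' f x) e.
Proof.
move=> he h1 f hf; have [t t0 ht] := l2_fin f hf.
apply: le_trans (sqnorm_le _ (fun x => S f x - S' f x) (sq a) (sq_ge0 a) _) _.
  by move=> x; rewrite -mulrBr sqM.
apply: le_trans (lee_wpmul2l _ (h1 f hf)) _; first by rewrite lee_fin; exact: sq_ge0.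
by rewrite ht -!EFinM lee_fin mulrA ler_wpM2r.
Qed.

Lemma l2_sub (R : realType) (X : countType) (f g : vec R X) :
  in_l2 f -> in_l2 g -> in_l2 (fun x => f x - g x).
Proof.
move=> hf hg; have := l2_add f (fun x => -1 * g x) hf (l2_scale (-1) g hg).
by have -> : (fun x => f x + -1 * g x) = (fun x => f x - g x) by apply: funext => x; rewrite mulN1r.
Qed.

Lemma close_comp (R : realType) (X : countType) (S S' T T' : op R X) (e e1 e2 cT cS : R) :
  bounded_op S -> bounded_op S' -> bounded_op T -> bounded_op T' ->
  0 <= cT -> (forall f, in_l2 f -> (sqnorm (T f) <= cT%:E * sqnorm f)%E) ->
  0 <= cS -> (forall f, in_l2 f -> (sqnorm (S' f) <= cS%:E * sqnorm f)%E) ->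
  2 * (e1 ^+ 2 * cT) + 2 * (cS * e2 ^+ 2) <= e ^+ 2 ->
  op_close S S' e1 -> op_close T T' e2 ->
  op_close (fun f => S (T f)) (fun f => S' (T' f)) e.
Proof.
move=> hS hS' hT hT' cT0 hcT cS0 hcS he h1 h2 f hf; have [t t0 ht] := l2_fin f hf.
have lT : in_l2 (T f) by case: hT => + _ _; apply.
have lT' : in_l2 (T' f) by case: hT' => + _ _; apply.
have -> : (fun x => S (T f) x - S' (T' f) x) =
          (fun x => (S (T f) x - S' (T f) x) + S' (fun w => T f w - T' f w) x).
  by rewrite (opB S') //; apply: funext => x; rewrite addrA subrK.
apply: (@le_trans _ _ (((2 * (e1 ^+ 2 * cT) + 2 * (cS * e2 ^+ 2)) * t)%:E)); last first.
  by rewrite ht -EFinM lee_fin ler_wpM2r.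
apply: (chain2 _ (sqnorm (fun x => S (T f) x - S' (T f) x))
                 (sqnorm (S' (fun w => T f w - T' f w)))).
+ exact: sqnorm_ge0.
+ exact: sqnorm_ge0.
+ exact: sqnorm_add.
+ apply: le_trans (h1 _ lT) _; rewrite -mulrA (EFinM (e1 ^+ 2) (cT * t)); apply: lee_wpmul2l.
    by rewrite lee_fin sqr_ge0.
  by rewrite EFinM -ht; exact: hcT.
+ have ld : in_l2 (fun w => T f w - T' f w).
    exact: l2_sub.
  apply: le_trans (hcS _ ld) _; rewrite -mulrA (EFinM cS (e2 ^+ 2 * t)); apply: lee_wpmul2l.
    by rewrite lee_fin.
  by rewrite (EFinM (e2 ^+ 2) t) -ht; exact: h2.
Qed.

Lemma close_self (R : realType) (X : countType) (S : op R X) (e : R) : op_close S S e.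
Proof.
move=> f hf; have -> : (fun x => S f x - S f x) = (fun _ => 0).
  by apply: funext => x; rewrite subrr.
rewrite {1}/sqnorm esum1; last by move=> x _; have := sq0 R; rewrite /sq => ->.
by apply: mule_ge0; [rewrite lee_fin sqr_ge0 | exact: sqnorm_ge0].
Qed.

Lemma bounded_id (R : realType) (X : countType) : bounded_op (fun f : vec R X => f).
Proof.
split => //; exists 1 => f hf; by rewrite mul1e.
Qed.

Lemma sq1 (R : realType) : sq (1 : R[i]) = 1.
Proof. by rewrite /sq /= expr1n expr0n /= addr0. Qed.

Lemma rsum_single (R : realType) (X : countType) (y : X) (r : R) :
  rsum (fun x => if x == y then r else 0) = r.
Proof.
have E : forall s : R, (\esum_(x in [set: X]) (Num.max (if x == y then s else 0) 0)%:E)%E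
           = (Num.max s 0)%:E.
  move=> s; rewrite (eq_esum (b := fun x => if x \in [set y] then (Num.max s 0)%:E else 0%E)).
    by rewrite -esum_mkcond esum_set1 // lee_fin le_max lexx orbT.
  by move=> x _; rewrite in_set1; case: (x == y) => //=; rewrite maxxx.
rewrite /rsum E.
have -> : (\esum_(x in [set: X]) (Num.max (- (if x == y then r else 0)) 0)%:E)%E
          = (Num.max (- r) 0)%:E.
  by rewrite -E; apply: eq_esum => x _; case: (x == y); rewrite ?oppr0.
rewrite /=.
have [r0|r0] := leP 0 r.
  by rewrite max_r ?subr0 // oppr_le0.
by rewrite max_l ?sub0r ?opprK // oppr_ge0 ltW.
Qed.

Lemma ip_delta (R : realType) (X : countType) (y : X) (h : vec R X) :
  ip (delta R y) h = h y.
Proof.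
rewrite /ip.
have -> : (fun x => reC (conjc (delta R y x) * h x)) = (fun x => if x == y then reC (h y) else 0).
  apply: funext => x; rewrite /delta; have [->|] := eqVneq x y.
    by case: (h y) => a b /=; rewrite oppr0 mul0r subr0 mul1r.
  by move=> _; case: (h x) => a b /=; rewrite oppr0 !mul0r subr0.
have -> : (fun x => imC (conjc (delta R y x) * h x)) = (fun x => if x == y then imC (h y) else 0).
  apply: funext => x; rewrite /delta; have [->|] := eqVneq x y.
    by case: (h y) => a b /=; rewrite oppr0 mul0r addr0 mul1r.
  by move=> _; case: (h x) => a b /=; rewrite oppr0 !mul0r addr0.
by rewrite !rsum_single; case: (h y).
Qed.

Lemma arith_half (R : realType) (c e : R) : 0 <= c -> 0 < e ->
  2 * ((e / (2 * (1 + c))) ^+ 2 * c) <= e ^+ 2 / 2.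
Proof.
move=> c0 e0; set u := e / (2 * (1 + c)).
have hu : u * (2 * (1 + c)) = e by rewrite /u mulfVK // mulf_neq0 // gt_eqF // ltr_pwDl.
rewrite -hu; have u2 := sqr_ge0 u.
have -> : (u * (2 * (1 + c))) ^+ 2 / 2 = 2 * (u ^+ 2 * (1 + c) ^+ 2).
  by field.
rewrite ler_pM2l // ler_wpM2l //.
have -> : (1 + c) ^+ 2 = 1 + 2 * c + c ^+ 2 by ring.
have := sqr_ge0 c; lra.
Qed.

Lemma arith_scale (R : realType) (s e : R) : 0 <= s -> 0 < e ->
  s * (e / (1 + s)) ^+ 2 <= e ^+ 2.
Proof.
move=> s0 e0; set u := e / (1 + s).
have h1 : 0 < 1 + s by lra.
have hu : u * (1 + s) = e by rewrite /u mulfVK // gt_eqF.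
rewrite -hu; have u2 := sqr_ge0 u.
have -> : (u * (1 + s)) ^+ 2 = u ^+ 2 * (1 + s) ^+ 2 by ring.
rewrite mulrC ler_wpM2l //.
have -> : (1 + s) ^+ 2 = 1 + 2 * s + s ^+ 2 by ring.
have := sqr_ge0 s; lra.
Qed.

Theorem mainTheorem7 (R : realType) (X : countType) (d : X -> X -> R) (A : set X) :
  is_metric d -> discrete_metric d -> A !=set0 ->
  (forall k : nat, ~` Nbhd d A k !=set0) ->
  (* M_{X,d^A} is a (right Hilbert C*_u(X)-) submodule of C*_u(X) *)
  [/\ (forall T, MdA d A T -> Cu d T) /\
      (forall S T, MdA d A S -> MdA d A T -> MdA d A (fun f x => S f x + T f x)),
      (forall (a : R[i]) S, MdA d A S -> MdA d A (fun f x => a * S f x)),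
      (forall S T, MdA d A S -> Cu d T -> MdA d A (fun f => S (T f))),
  (* M_{X,d^A} <> C*_u(X) *)
      (exists2 T, Cu d T & ~ MdA d A T)
  (* orthogonal complement: T in C*_u(X) with S^* T = 0 for all S in M is 0 *)
    & forall T, Cu d T ->
        (forall S, MdA d A S -> forall f g, in_l2 f -> in_l2 g -> ip (S f) (T g) = 0) ->
        forall f, in_l2 f -> T f = (fun _ => 0)].
Proof.
move=> hm hdisc hA hN; have [d0 deq dsym dtri] := hm.
split.
- split.
  + move=> T [hT hap]; split => // e e0; have [S [hS [L hL]] hc] := hap e e0.
    exists S => //; split => //; exists L => x y hxy; apply: hL.
    apply: le_trans (@dA_ge _ _ d A y x hm hA); rewrite dsym; lra.
  + move=> S T [hS hSa] [hT hTa]; split; first exact: bounded_add.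
    move=> e e0; have e20 : 0 < e / 2 by rewrite divr_gt0.
    have [S' [hS' [L1 hL1]] c1] := hSa _ e20; have [T' [hT' [L2 hL2]] c2] := hTa _ e20.
    exists (fun f x => S' f x + T' f x); last exact: close_add.
    split; first exact: bounded_add.
    exists (Num.max L1 L2) => x y hxy /=.
    rewrite hL1 ?hL2 ?addr0 //; apply: le_trans hxy; by rewrite le_max lexx ?orbT.
- move=> a S [hS hSa]; split; first exact: bounded_scale.
  move=> e e0; have k0 : 0 < 1 + sq a by have := sq_ge0 a; lra.
  have e10 : 0 < e / (1 + sq a) by rewrite divr_gt0.
  have [S' [hS' [L hL]] c1] := hSa _ e10.
  exists (fun f x => a * S' f x).
    split; first exact: bounded_scale.
    by exists L => x y hxy; rewrite hL // mulr0.
  apply: (@close_scale _ _ a S S' e _ _ c1).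
  by apply: arith_scale => //; exact: sq_ge0.
- move=> S T [hS hSa] [hT hTa]; split; first exact: bounded_comp.
  move=> e e0.
  have [cT cT0 hcT] := bound_nn T hT.
  have e10 : 0 < e / (2 * (1 + cT)) by rewrite divr_gt0 // mulr_gt0 // ltr_pwDl.
  have [S' [hS' [L1 hL1]] c1] := hSa _ e10.
  have [cS cS0 hcS] := bound_nn S' hS'.
  have e20 : 0 < e / (2 * (1 + cS)) by rewrite divr_gt0 // mulr_gt0 // ltr_pwDl.
  have [T' [hT' [L2 hL2]] c2] := hTa _ e20.
  exists (fun f => S' (T' f)); last first.
    apply: (@close_comp _ _ S S' T T' e _ _ cT cS hS hS' hT hT' cT0 hcT cS0 hcS _ c1 c2).
    have h1 := @arith_half _ cT e cT0 e0; have h2 := @arith_half _ cS e cS0 e0.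
    rewrite [cS * _]mulrC; lra.
  split; first exact: bounded_comp.
  exists (L1 + L2) => x y hxy.
  have l2x : in_l2 (T' (delta R x)) by case: hT' => + _ _; apply; exact: l2_delta.
  apply: (@zero_at _ _ S' _ y hS' l2x) => z nz; apply: hL1.
  have hzx : d z x < L2.
    rewrite ltNge; apply/negP => h; move: nz; by rewrite hL2 // eqxx.
  have := @dA_tri _ _ d A x y z hm hA; rewrite (dsym x z); lra.
- exists (fun f => f).
    split; first exact: bounded_id.
    move=> e e0; exists (fun f => f); last exact: close_self.
    split; first exact: bounded_id.
    exists 1 => x y hxy; rewrite /delta; case: eqP => // exy.
    by move: hxy; rewrite exy (proj2 (deq y y) erefl) ler10.
  move=> [_ hap]; have h2 : (0 : R) < 1 / 2 by rewrite divr_gt0.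
  have [S [hS [L hL]] hc] := hap _ h2.
  have [x hx] := @far_point _ _ d A L hm hA hN.
  have h0 := hL x x hx.
  have := hc (delta R x) (l2_delta x).
  rewrite {2}/delta sqnorm_single sq1 mule1.
  move=> hle; have := le_trans (sqnorm_pt _ x) hle.
  rewrite h0 /delta eqxx subr0 sq1 lee_fin.
  have -> : ((1 / 2) ^+ 2 : R) = 1 / 4 by field.
  lra.
- move=> T hT H f hf; apply: funext => y.
  set P := fun (h : vec R X) w => h y * delta R y w.
  have MP : MdA d A P.
    have bP : bounded_op P.
      split.
      + move=> h hh; exact: l2_scale (l2_delta y).
      + move=> a g g' _ _; apply: funext => w; by rewrite /P mulrDl mulrA.
      + exists 1 => h hh; rewrite mul1e; apply: le_trans (sqnorm_le _ h 1 ler01 _) _.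
          move=> w; rewrite mul1r sqM /delta; case: eqP => [->|_].
            by rewrite sq1 mulr1 lexx.
          by rewrite sq0 mulr0; exact: sq_ge0.
        by rewrite mul1e.
    split => // e e0; exists P; last exact: close_self.
    split => //; exists (dA01 d A y y + 1) => x' y' h.
    rewrite /P /delta; have [ey|ny] := eqVneq y x'.
      have [ey'|ny'] := eqVneq y' y; last by rewrite mulr0.
      by exfalso; move: h; rewrite ey' -ey; lra.
    by rewrite mul0r.
  have := H P MP (delta R y) f (l2_delta y) hf.
  have -> : P (delta R y) = delta R y.
    by apply: funext => w; rewrite /P /delta eqxx mul1r.
  by rewrite ip_delta.
Qed.
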